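(* Let $\tau_i$ be a task with period $p_i$ and execution time $c_i$, and let $\omega_k$ be a busy interval of length $l_k$ in a schedule as described in the context. Let $N\ge 0$ be an integer. (i) If $(Np_i-c_i)^+\le l_k<Np_i+c_i$, where $x^+=\max(x,0)$, then $\omega_k$ contains exactly $N$ jobs of $\tau_i$. (ii) If $Np_i+c_i\le l_k<(N+1)p_i-c_i$, then $\omega_k$ contains either $N$ or $N+1$ jobs of $\tau_i$.
   Context: Model: a single processor runs a set of periodic tasks $\tau_1,\dots,\tau_n$ under a preemptive, work-conserving, fixed-priority scheduler. Work-conserving means the processor is never idle while some released job is unfinished. Each task $\tau_i$ has a period $p_i>0$, a constant execution time $c_i$ with $0<c_i\le p_i$, an initial arrival time (offset) $a_i$, and a distinct fixed priority. Its $h$-th job is released at time $\sigma^{\tau_i}_h=a_i+hp_i$, for every $h\in\mathbb{Z}$; the schedule is considered as running forever in both directions of time. Each job needs exactly $c_i$ units of processor time. The schedule is assumed feasible, meaning every busy interval has finite length. A busy interval is a maximal time interval $[\alpha,\beta)$ during which the processor is continuously executing jobs. Its length is $l=\beta-\alpha$. Distinct busy intervals are separated by idle time. A busy interval contains a job if that job executes during it. Equivalently, the number of jobs of $\tau_i$ contained in $[\alpha,\beta)$ equals $|\{h\in\mathbb{Z}:\sigma^{\tau_i}_h\in[\alpha,\beta)\}|$. *)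

(* Defs.v *)
From Stdlib Require Import Reals List ZArith.
Open Scope R_scope.

(* A job is identified by (task index i, job index h : Z). *)
Definition job := (nat * Z)%type.

Definition job_eqb (j k : job) : bool :=
  (Nat.eqb (fst j) (fst k) && Z.eqb (snd j) (snd k))%bool.

Definition release (a p : nat -> R) (i : nat) (h : Z) : R := a i + IZR h * p i.

(* A (uniprocessor) schedule: at time t, either the processor is idle (None)
   or it executes the job Some (i,h). *)
Definition schedule := R -> option job.

Definition ind (s : schedule) (j : job) (t : R) : R :=
  match s t with
  | Some j' => if job_eqb j' j then 1 else 0
  | None => 0
  end.

(* Regularity: the execution-time indicators are Riemann integrable on every
   bounded interval, so that "processor time received" is well-defined. *)
Definition integrable_schedule (s : schedule) :=
  forall (j : job) (x y : R), Riemann_integrable (ind s j) x y.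

Definition service (s : schedule) (Hs : integrable_schedule s) (j : job) (x y : R) : R :=
  RiemannInt (Hs j x y).

Definition pending (a p c : nat -> R) (s : schedule) (Hs : integrable_schedule s)
  (i : nat) (h : Z) (t : R) : Prop :=
  release a p i h <= t /\ service s Hs (i, h) (release a p i h) t < c i.

Definition busy (s : schedule) (t : R) : Prop := s t <> None.

(* Preemptive, work-conserving, fixed-priority schedule of tasks 0..n-1
   (smaller prio value = higher priority). *)
Definition valid_schedule (n : nat) (a p c : nat -> R) (prio : nat -> nat)
  (s : schedule) (Hs : integrable_schedule s) : Prop :=
  (forall t i h, s t = Some (i, h) -> (i < n)%nat /\ pending a p c s Hs i h t) /\
  (forall i h, (i < n)%nat ->
     exists t, release a p i h <= t /\ service s Hs (i, h) (release a p i h) t = c i) /\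
  (forall t i h, (i < n)%nat -> pending a p c s Hs i h t -> busy s t) /\
  (forall t i h i' h', s t = Some (i, h) -> (i' < n)%nat ->
     pending a p c s Hs i' h' t -> (prio i <= prio i')%nat).

(* Feasibility: every busy interval has finite length, i.e. idle times occur
   arbitrarily far in the future and in the past. *)
Definition feasible (s : schedule) : Prop :=
  forall t0, (exists t, t0 <= t /\ ~ busy s t) /\ (exists t, t <= t0 /\ ~ busy s t).

Definition busy_interval (s : schedule) (alpha beta : R) : Prop :=
  alpha < beta /\
  (forall t, alpha <= t < beta -> busy s t) /\
  (forall alpha' beta', alpha' <= alpha -> beta <= beta' ->
     (forall t, alpha' <= t < beta' -> busy s t) -> alpha' = alpha /\ beta' = beta).

Definition num_jobs_in (a p : nat -> R) (i : nat) (alpha beta : R) (k : nat) : Prop :=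
  exists l : list Z, NoDup l /\
    (forall h, In h l <-> alpha <= release a p i h < beta) /\ length l = k.

(* Main.v *)
Require Import Defs.
From Stdlib Require Import Reals List ZArith.
From Stdlib Require Import Lra Lia Classical.
Open Scope R_scope.

Lemma service_le (s : schedule) (Hs : integrable_schedule s) j x y :
  x <= y -> service s Hs j x y <= y - x.
Proof.
  intros Hxy. unfold service.
  rewrite <- (Rmult_1_l (y - x)).
  rewrite <- (RiemannInt_P15 (RiemannInt_P14 x y 1)).
  apply RiemannInt_P19; auto.
  intros t _. unfold Defs.ind, fct_cte. destruct (s t) as [j0|]; simpl;
    [destruct (job_eqb j0 j)|]; lra.
Qed.

Lemma rel_le a p i h h' : 0 < p i -> (h <= h')%Z -> release a p i h <= release a p i h'.
Proof.
  intros Hp H. unfold release. apply IZR_le in H. nra.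
Qed.

Lemma rel_lt a p i h h' : 0 < p i -> (h < h')%Z -> release a p i h < release a p i h'.
Proof.
  intros Hp H. unfold release. apply IZR_lt in H. nra.
Qed.

Lemma count_lemma a p i alpha beta h0 K : 0 < p i ->
  alpha <= release a p i h0 -> release a p i (h0 - 1) < alpha ->
  ((K > 0)%nat -> release a p i (h0 + Z.of_nat K - 1) < beta) ->
  beta <= release a p i (h0 + Z.of_nat K) ->
  num_jobs_in a p i alpha beta K.
Proof.
  intros Hp H1 H2 H3 H4.
  exists (map (fun k => (h0 + Z.of_nat k)%Z) (seq 0 K)). split; [|split].
  - apply NoDup_map_NoDup_ForallPairs; [|apply seq_NoDup].
    intros x y _ _ E. lia.
  - intros h. rewrite in_map_iff. split.
    + intros [k [Hk Hin]]. apply in_seq in Hin. subst h. split.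
      * apply Rle_trans with (1 := H1). apply rel_le; [assumption|lia].
      * apply Rle_lt_trans with (2 := H3 ltac:(lia)). apply rel_le; [assumption|lia].
    + intros [Ha Hb].
      assert (Hge : (h0 <= h)%Z).
      { destruct (Z_le_gt_dec h0 h) as [|Hl]; auto.
        exfalso. assert (release a p i h <= release a p i (h0 - 1)) by (apply rel_le; [assumption|lia]). lra. }
      assert (Hlt : (h < h0 + Z.of_nat K)%Z).
      { destruct (Z_lt_ge_dec h (h0 + Z.of_nat K)) as [|Hl]; auto.
        exfalso. assert (release a p i (h0 + Z.of_nat K) <= release a p i h) by (apply rel_le; [assumption|lia]). lra. }
      exists (Z.to_nat (h - h0)). split; [lia|]. apply in_seq. lia.
  - rewrite length_map, length_seq. reflexivity.
Qed.

Theorem theorem1 (n : nat) (a p c : nat -> R) (prio : nat -> nat)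
  (s : schedule) (Hs : integrable_schedule s)
  (Hp : forall i, (i < n)%nat -> 0 < p i)
  (Hc : forall i, (i < n)%nat -> 0 < c i <= p i)
  (Hprio : forall i i', (i < n)%nat -> (i' < n)%nat -> prio i = prio i' -> i = i')
  (Hvalid : valid_schedule n a p c prio s Hs)
  (Hfeas : feasible s)
  (i : nat) (Hi : (i < n)%nat) (alpha beta : R)
  (Hbusy : busy_interval s alpha beta) (N : nat) :
  (Rmax (INR N * p i - c i) 0 <= beta - alpha < INR N * p i + c i ->
     num_jobs_in a p i alpha beta N) /\
  (INR N * p i + c i <= beta - alpha < INR (N + 1) * p i - c i ->
     num_jobs_in a p i alpha beta N \/ num_jobs_in a p i alpha beta (N + 1)).
Proof.
  destruct Hvalid as [_ [_ [Hwc _]]].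
  destruct Hbusy as [Hab [Hb Hmax]].
  pose proof (Hp i Hi) as Hpi. pose proof (Hc i Hi) as Hci.
  assert (Hfin : forall h t, ~ busy s t -> release a p i h <= t ->
             c i <= service s Hs (i, h) (release a p i h) t).
  { intros h t Hn Hr. destruct (Rle_lt_dec (c i) (service s Hs (i, h) (release a p i h) t)); auto.
    exfalso. apply Hn. apply (Hwc t i h Hi). split; auto. }
  assert (HA : forall h, release a p i h < alpha -> release a p i h < alpha - c i).
  { intros h Hr.
    assert (Hex : exists t, release a p i h <= t < alpha /\ ~ busy s t).
    { apply NNPP. intros Hne.
      assert (E : release a p i h = alpha /\ beta = beta).
      { apply Hmax; try lra. intros t Ht.
        destruct (Rlt_le_dec t alpha).
        - apply NNPP. intros Hnb. apply Hne. exists t. split; [lra|auto].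
        - apply Hb. lra. }
      lra. }
    destruct Hex as [t [Ht Hnb]].
    pose proof (Hfin h t Hnb (proj1 Ht)).
    pose proof (service_le s Hs (i, h) _ _ (proj1 Ht)). lra. }
  assert (HB : forall h, alpha <= release a p i h < beta -> release a p i h + c i <= beta).
  { intros h Hr. destruct (Rle_lt_dec (release a p i h + c i) beta) as [|Hgt]; auto.
    exfalso.
    assert (Hex : exists t, beta <= t < release a p i h + c i /\ ~ busy s t).
    { apply NNPP. intros Hne.
      assert (E : alpha = alpha /\ release a p i h + c i = beta).
      { apply Hmax; try lra. intros t Ht.
        destruct (Rlt_le_dec t beta).
        - apply Hb. lra.
        - apply NNPP. intros Hnb. apply Hne. exists t. split; [lra|auto]. }
      lra. }
    destruct Hex as [t [Ht Hnb]].
    assert (Hrt : release a p i h <= t) by lra.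
    pose proof (Hfin h t Hnb Hrt).
    pose proof (service_le s Hs (i, h) _ _ Hrt). lra. }
  (* ceiling *)
  set (y := (alpha - a i) / p i).
  destruct (archimed (- y)) as [U1 U2].
  set (h0 := (1 - up (- y))%Z).
  assert (Hy1 : y <= IZR h0).
  { unfold h0. rewrite minus_IZR. lra. }
  assert (Hy2 : IZR h0 - 1 < y).
  { unfold h0. rewrite minus_IZR. lra. }
  assert (Hyp : y * p i = alpha - a i) by (unfold y; field; lra).
  assert (R0 : alpha <= release a p i h0).
  { unfold release. nra. }
  assert (R1 : release a p i (h0 - 1) < alpha).
  { unfold release. rewrite minus_IZR. nra. }
  pose proof (HA _ R1) as R1'.
  assert (Hrel : forall k, release a p i (h0 + k) = release a p i h0 + IZR k * p i).
  { intros k. unfold release. rewrite plus_IZR. ring. }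
  assert (Hrel1 : release a p i h0 = release a p i (h0 - 1) + p i).
  { unfold release. rewrite minus_IZR. ring. }
  assert (HN : forall m : nat, IZR (Z.of_nat m) = INR m) by (intros; rewrite <- INR_IZR_INZ; auto).
  split.
  - intros [Hl1 Hl2]. pose proof (Rmax_l (INR N * p i - c i) 0).
    apply count_lemma with (h0 := h0); auto.
    + intros HK. replace (h0 + Z.of_nat N - 1)%Z with (h0 + (Z.of_nat N - 1))%Z by lia.
      rewrite Hrel, minus_IZR, HN. lra.
    + destruct (Rle_lt_dec beta (release a p i (h0 + Z.of_nat N))) as [|Hlt]; auto.
      exfalso. assert (Hin : alpha <= release a p i (h0 + Z.of_nat N) < beta).
      { split; auto. apply Rle_trans with (1 := R0). apply rel_le; [assumption|lia]. }
      pose proof (HB _ Hin). rewrite Hrel, HN in H0. lra.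
  - intros [Hl1 Hl2]. rewrite plus_INR in Hl2. simpl in Hl2.
    destruct (Rle_lt_dec beta (release a p i (h0 + Z.of_nat N))) as [Hge|Hlt].
    + left. apply count_lemma with (h0 := h0); auto.
      intros HK. replace (h0 + Z.of_nat N - 1)%Z with (h0 + (Z.of_nat N - 1))%Z by lia.
      rewrite Hrel, minus_IZR, HN. lra.
    + right. apply count_lemma with (h0 := h0); auto.
      * intros _. replace (h0 + Z.of_nat (N + 1) - 1)%Z with (h0 + Z.of_nat N)%Z by lia.
        auto.
      * rewrite Hrel, HN, plus_INR. simpl. lra.
Qed.
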